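(* Consider a congestion game with $m\ge1$ players and $F\ge 2$ facilities in which every player has the full action space $\mathcal A_i=2^{\mathcal F}$, and let $\bm a^*$ be a pure Nash equilibrium. Let $S=\{\bm a^*\}\cup\{(a^*_i\,\triangle\,\{f\},\bm a^*_{-i}): i\in[m],\ f\in\mathcal F\}$ (the NE together with all joint actions in which exactly one player toggles membership of exactly one facility; $|S|=mF+1$), let $\rho$ be uniform on $S$, and let $\bm a^1,\dots,\bm a^n$ be i.i.d. from $\rho$. Let $\delta\in(0,1)$. If $n\ge 8(mF+1)\log((mF+1)/\delta)$, then with probability at least $1-\delta$, for every $i\in[m]$ and every $\pi_i\in\Delta(\mathcal A_i)$, $$V\succeq I+\frac{n}{2mF^4}\,\mathbb E_{\bm a\sim(\pi_i,\bm a^*_{-i})}\big[A_i(\bm a)A_i(\bm a)^\top\big],$$ where $(\pi_i,\bm a^*_{-i})$ denotes the policy in which player $i$ plays $\pi_i$ and every other player $j$ plays $a^*_j$ deterministically. That is, Assumption (Weak Covariance Domination) holds with $C_{\mathrm{agent}}=\frac{1}{2mF^4}$ and $\pi^*=\bm a^*$.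
   Context: Congestion game: $m$ players, finite facility set $\mathcal F$ with $F=|\mathcal F|$, action sets $\mathcal A_i\subseteq 2^{\mathcal F}$, $\mathcal A=\prod_i\mathcal A_i$, $n^f(\bm a)=|\{i: f\in a_i\}|$; facility $f$ with $\ell\ge1$ users has mean reward $r^f(\ell)$ and player $i$'s mean reward is $r_i(\bm a)=\sum_{f\in a_i}r^f(n^f(\bm a))$. A pure Nash equilibrium is a joint action $\bm a^*$ such that no player can increase $r_i$ by changing only its own action. Feature map: let $d=mF$ and index the coordinates of $\mathbb R^d$ by pairs $(f,\ell)$ with $f\in\mathcal F$, $\ell\in\{1,\dots,m\}$; let $e_{(f,\ell)}$ be the standard basis vectors. For $i\in[m]$ and $\bm a\in\mathcal A$, $A_i(\bm a)=\sum_{f\in a_i}e_{(f,n^f(\bm a))}\in\{0,1\}^d$, so that $r_i(\bm a)=\langle A_i(\bm a),\theta\rangle$ with $\theta_{(f,\ell)}=r^f(\ell)$. Agent-level covariance matrix: $V=I+\sum_{k=1}^n\sum_{i=1}^m A_i(\bm a^k)A_i(\bm a^k)^\top$, where $\bm a^1,\dots,\bm a^n$ are the joint actions in the dataset. $\succeq$ is the positive semidefinite (Loewner) order. *)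

(* Defs.v *)
From HB Require Import structures.
From mathcomp Require Import all_boot all_order all_algebra.
From mathcomp Require Import boolp reals exp.
Set Implicit Arguments. Unset Strict Implicit. Unset Printing Implicit Defensive.
Import Order.TTheory GRing.Theory Num.Theory.
Local Open Scope ring_scope.

Section Congestion.
Variables (R : realType) (m : nat) (T : finType).

Definition joint := {ffun 'I_m -> {set T}}.

Definition load (a : joint) (f : T) : nat := #|[set i | f \in a i]|.

Definition reward (r : T -> nat -> R) (a : joint) (i : 'I_m) : R :=
  \sum_(f in a i) r f (load a f).

Definition upd (a : joint) (i : 'I_m) (s : {set T}) : joint :=
  [ffun j => if j == i then s else a j].

Definition is_pure_NE (r : T -> nat -> R) (a : joint) : Prop :=
  forall (i : 'I_m) (s : {set T}), reward r (upd a i s) i <= reward r a i.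

Definition toggle (a : joint) (i : 'I_m) (f : T) : joint :=
  upd a i ((a i :\: [set f]) :|: ([set f] :\: a i)).

Definition suppS (a : joint) : {set joint} :=
  a |: [set toggle a i f | i : 'I_m, f : T].

(* feature coordinates (f, l) with l in {1..m}; l is encoded by the ordinal l-1 *)
Definition coord := (T * 'I_m)%type.
Definition dim := #|{: coord}|.

(* A_i(a) = sum_{f in a_i} e_{(f, n^f(a))}, as a column vector in R^d, d = mF *)
Definition feat (a : joint) (i : 'I_m) : 'cV[R]_dim :=
  \col_(j < dim)
    (let: (f, l) := enum_val j in
     if (f \in a i) && (load a f == l.+1)%N then 1 else 0).

Definition outer (v : 'cV[R]_dim) : 'M[R]_dim := v *m v^T.

Definition covV (n : nat) (w : {ffun 'I_n -> joint}) : 'M[R]_dim :=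
  1%:M + \sum_(k < n) \sum_(i < m) outer (feat (w k) i).

Definition psd (M : 'M[R]_dim) : Prop :=
  forall x : 'cV[R]_dim, 0 <= (x^T *m M *m x) 0 0.
Definition loewner_ge (M N : 'M[R]_dim) : Prop := psd (M - N).

Definition is_dist (p : {ffun {set T} -> R}) : Prop :=
  (forall s, 0 <= p s) /\ \sum_s p s = 1.

Definition exp_outer (astar : joint) (i : 'I_m) (p : {ffun {set T} -> R}) : 'M[R]_dim :=
  \sum_(s : {set T}) p s *: outer (feat (upd astar i s) i).

Definition good_event (astar : joint) (n : nat) (w : {ffun 'I_n -> joint}) : Prop :=
  forall (i : 'I_m) (p : {ffun {set T} -> R}), is_dist p ->
    loewner_ge (covV w)
      (1%:M + (n%:R / (2 * m%:R * (#|T|%:R) ^+ 4)) *: exp_outer astar i p).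

Definition prob_iid_unif (S : {set joint}) (n : nat)
    (E : {ffun 'I_n -> joint} -> Prop) : R :=
  (\sum_(w : {ffun 'I_n -> joint} | [forall k, w k \in S]) (`[< E w >])%:R)
    / (#|S|%:R ^+ n).

End Congestion.

(* Main.v *)
Require Import Defs.

From HB Require Import structures.
From mathcomp Require Import all_boot all_order all_algebra.
From mathcomp Require Import boolp reals exp sequences.
From mathcomp Require Import ring lra zify.
Import Order.TTheory GRing.Theory Num.Theory.
Local Open Scope ring_scope.

Lemma sum_ffun_prod (R : realType) (n : nat) (J : finType) (S : {set J}) (F : J -> R) :
  \sum_(w : {ffun 'I_n -> J} | [forall k, w k \in S]) \prod_(k < n) F (w k)
   = (\sum_(x in S) F x) ^+ n.
Proof.
rewrite -[in RHS](card_ord n) -prodr_const.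
rewrite (bigA_distr_big (fun x => x \in S) (fun (_ : 'I_n) x => F x)) /=.
apply: eq_bigl => w; apply/idP/idP.
  by move=> /forallP h; apply/ffun_onP => k; exact: h.
move=> /ffun_onP h; apply/forallP => k; have hk := h k. exact hk.
Qed.

Lemma prod_cnt (R : realType) (n : nat) (J : finType) (w : {ffun 'I_n -> J}) (b : J) (z : R) :
  \prod_(k < n) (if w k == b then z else 1) = z ^+ #|[set k | w k == b]|.
Proof.
rewrite -big_mkcond /= -prodr_const; apply: eq_bigl => k; by rewrite inE.
Qed.

Lemma sum_if (R : realType) (J : finType) (S : {set J}) (b : J) (z : R) :
  b \in S -> \sum_(x in S) (if x == b then z else 1) = #|S|%:R - 1 + z.
Proof.
move=> bS.
have -> : \sum_(x in S) (if x == b then z else 1) =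
  \sum_(x in S) 1 + \sum_(x in S) (if x == b then z - 1 else 0).
  by rewrite -big_split /=; apply: eq_bigr => x _; case: eqP => _; ring.
rewrite sumr_const (bigD1 b) //= eqxx big1 ?addr0; first lra.
by move=> x /andP[_ /negbTE ->].
Qed.

Lemma expR34 (R : realType) : expR (- (3/4 : R)) <= 1/2.
Proof.
have h : (2 : R) <= expR (3/4).
  have -> : (3/4 : R) = 8%:R * (3/32) by rewrite -[8%:R]/(8 : R); field.
  rewrite expRM_natl.
  have h1 : 1 + 3/32 <= expR (3/32 : R) by apply: expR_ge1Dx.
  set x := expR _ in h1 *.
  have -> : x ^+ 8 = ((x ^+ 2) ^+ 2) ^+ 2 by rewrite -!exprM.
  have h2 : 1196/1000 <= x ^+ 2 by rewrite expr2; nra.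
  have h3 : 143/100 <= (x ^+ 2) ^+ 2 by rewrite [X in _ <= X]expr2; nra.
  by rewrite [X in _ <= X]expr2; nra.
rewrite expRN div1r lef_pV2 ?posrE ?expR_gt0 //.
Qed.
Lemma num_final (R : realType) (N n : nat) (delta : R) :
 (0 < N)%N -> 0 < delta -> 8 * N%:R * ln (N%:R / delta) <= n%:R ->
 N%:R * expR (3/4 * (n%:R / (2 * N%:R))) * (N%:R - 1 + expR (- (3/4)))^+n
   <= delta * N%:R ^+ n.
Proof.
move=> N0 d0 hn.
have hz := expR34 R; have z0 := expR_ge0 (- (3/4 : R)).
set z := expR _ in hz z0 *.
have N1 : (1 : R) <= N%:R by rewrite ler1n.
have Np : (0 : R) < N%:R by lra.
have e1 : (N%:R - 1 + z) ^+ n <= (N%:R - 1/2) ^+ n.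
  by apply: lerXn2r; rewrite ?nnegrE; lra.
have e2 : (N%:R - 1/2 : R) <= N%:R * expR (- (1 / (2 * N%:R))).
  have := expR_ge1Dx (- (1 / (2 * N%:R)) : R).
  have -> : (N%:R - 1/2 : R) = N%:R * (1 + - (1 / (2 * N%:R))).
    by field; rewrite pnatr_eq0 -lt0n.
  by move=> h; rewrite ler_pM2l.
have e3 : (N%:R - 1/2 : R) ^+ n <= N%:R ^+ n * expR (n%:R * - (1 / (2 * N%:R))).
  rewrite expRM_natl -exprMn; apply: lerXn2r; rewrite ?nnegrE //; try lra.
have e4 : N%:R * expR (- (n%:R / (8 * N%:R))) <= delta.
  have lnp : 0 < N%:R / delta by rewrite divr_gt0.
  have h : expR (- (n%:R / (8 * N%:R))) <= expR (- ln (N%:R / delta)).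
    rewrite ler_expR lerN2 ler_pdivlMr; last by rewrite mulr_gt0 // ltr0n.
    by rewrite mulrC.
  rewrite [X in _ <= X]expRN lnK // invf_div in h.
  by rewrite -ler_pdivlMl // [_^-1 * _]mulrC.
apply: (le_trans (y := N%:R * expR (3/4 * (n%:R / (2 * N%:R))) * (N%:R ^+ n * expR (n%:R * - (1 / (2 * N%:R)))))).
  by rewrite ler_pM2l ?mulr_gt0 ?expR_gt0 //; exact: le_trans e1 e3.
have -> : N%:R * expR (3/4 * (n%:R / (2 * N%:R))) *
  (N%:R ^+ n * expR (n%:R * - (1 / (2 * N%:R)))) =
  N%:R ^+ n * (N%:R * (expR (3/4 * (n%:R / (2 * N%:R))) * expR (n%:R * - (1 / (2 * N%:R))))) :> R by ring.
rewrite -expRD.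
have -> : 3 / 4 * (n%:R / (2 * N%:R)) + n%:R * - (1 / (2 * N%:R)) = - (n%:R / (8 * N%:R)) :> R.
  by field; rewrite pnatr_eq0 -lt0n.
by rewrite mulrC ler_pM2r // exprn_gt0.
Qed.

Lemma prob_part (R : realType) (J : finType) (S : {set J}) (n N : nat) (delta : R)
  (E : {ffun 'I_n -> J} -> Prop) :
  #|S| = N -> (0 < N)%N -> 0 < delta ->
  8 * N%:R * ln (N%:R / delta) <= n%:R ->
  (forall w : {ffun 'I_n -> J}, [forall k, w k \in S] ->
     (forall b, b \in S -> n%:R / (2 * N%:R) <= #|[set k | w k == b]|%:R :> R) -> E w) ->
  1 - delta <= (\sum_(w : {ffun 'I_n -> J} | [forall k, w k \in S]) (`[< E w >])%:R)
     / (#|S|%:R ^+ n).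
Proof.
move=> SN N0 d0 hn hE.
set c : R := n%:R / (2 * N%:R).
set z : R := expR (- (3/4)).
set e : R := expR (3/4 * c).
have e0 : 0 <= e by apply: expR_ge0.
have z0 : 0 <= z by apply: expR_ge0.
have key : forall w : {ffun 'I_n -> J}, [forall k, w k \in S] ->
    1 - \sum_(b in S) e * z ^+ #|[set k | w k == b]| <= (`[< E w >])%:R.
  move=> w wS.
  have [allb|] := boolP [forall (b | b \in S), c <= #|[set k | w k == b]|%:R].
    rewrite asboolT; last by apply: (hE w wS) => b bS; exact: (forall_inP allb b bS).
    rewrite lerBlDr lerDl; apply: sumr_ge0 => b _; apply: mulr_ge0 => //.
    exact: exprn_ge0.
  move=> /forall_inPn [b bS hb].
  have : 1 <= e * z ^+ #|[set k | w k == b]|.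
    rewrite /e /z -expRM_natl -expRD -[X in X <= _]expR0 ler_expR.
    move: hb; rewrite -ltNge => hb; lra.
  move=> h1.
  have : e * z ^+ #|[set k | w k == b]| <= \sum_(b in S) e * z ^+ #|[set k | w k == b]|.
    rewrite (bigD1 b) //= lerDl; apply: sumr_ge0 => x _; apply: mulr_ge0 => //.
    exact: exprn_ge0.
  move=> h2.
  have : 0 <= (`[< E w >])%:R :> R by apply: ler0n.
  lra.
have sum1 : \sum_(w : {ffun 'I_n -> J} | [forall k, w k \in S]) (1:R) = N%:R ^+ n.
  have h := @sum_ffun_prod R n J S (fun _ => (1:R)).
  rewrite -SN -(sumr_const (mem S)) -h; apply: eq_bigr => w _; by rewrite big1_eq.

have sumz : forall b, b \in S ->
    \sum_(w : {ffun 'I_n -> J} | [forall k, w k \in S]) z ^+ #|[set k | w k == b]|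
    = (N%:R - 1 + z) ^+ n.
  move=> b bS; rewrite -SN -(@sum_if R J S b z bS).
  rewrite -(@sum_ffun_prod R n J S (fun x => if x == b then z else 1)).
  by apply: eq_bigr => w _; rewrite prod_cnt.
have main : N%:R ^+ n - N%:R * e * (N%:R - 1 + z) ^+ n <=
    \sum_(w : {ffun 'I_n -> J} | [forall k, w k \in S]) (`[< E w >])%:R.
  apply: le_trans (ler_sum _ key).
  rewrite sumrB sum1 exchange_big /=.
  rewrite (eq_bigr (fun b => e * (N%:R - 1 + z) ^+ n)); last first.
    by move=> b bS; rewrite -mulr_sumr sumz.
  by rewrite sumr_const SN -[e * _ *+ N]mulr_natl mulrA.
have nf := @num_final R N n delta N0 d0 hn.
rewrite SN ler_pdivlMr; last by rewrite exprn_gt0 // ltr0n.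
rewrite -/c -/z -/e in nf.
lra.
Qed.

Definition qf {R : realType} {d : nat} (x : 'cV[R]_d) (M : 'M[R]_d) : R := (x^T *m M *m x) 0 0.
Definition dotv {R : realType} {d : nat} (x v : 'cV[R]_d) : R := (x^T *m v) 0 0.

Lemma qfB (R : realType) d (x : 'cV[R]_d) M N : qf x (M - N) = qf x M - qf x N.
Proof. by rewrite /qf mulmxBr mulmxBl !mxE. Qed.

Lemma qfZ (R : realType) d (x : 'cV[R]_d) c M : qf x (c *: M) = c * qf x M.
Proof. by rewrite /qf -scalemxAr -scalemxAl mxE. Qed.

Lemma qf_sum (R : realType) d (x : 'cV[R]_d) (I : finType) (F : I -> 'M[R]_d) :
  qf x (\sum_i F i) = \sum_i qf x (F i).
Proof. by rewrite /qf mulmx_sumr mulmx_suml summxE. Qed.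

Lemma qf_outer (R : realType) d (x v : 'cV[R]_d) :
  qf x (v *m v^T) = dotv x v ^+ 2.
Proof.
rewrite /qf /dotv mulmxA -(mulmxA _ v^T).
rewrite -[v^T *m x]trmxK trmx_mul trmxK mxE big_ord1 [in X in _ * X]mxE expr2.
by [].
Qed.

Lemma dotv_sum (R : realType) d (x v : 'cV[R]_d) :
  dotv x v = \sum_j x j 0 * v j 0.
Proof. by rewrite /dotv mxE; apply: eq_bigr => j _; rewrite mxE. Qed.

Definition Lo {m : nat} {T : finType} (b : joint m T) (i : 'I_m) (f : T) : nat :=
  #|[set j | (j != i) && (f \in b j)]|.

Lemma load_split m T (b : joint m T) i f : load b f = ((f \in b i) + Lo b i f)%N.
Proof.
rewrite /load (cardsD1 i) inE; congr (_ + _)%N; apply: eq_card => j; rewrite !inE.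
by [].
Qed.

Lemma Lo_upd m T (b : joint m T) i s f : Lo (upd b i s) i f = Lo b i f.
Proof.
apply: eq_card => j; rewrite !inE ffunE; by case: (j == i).
Qed.

Lemma upd_i m T (b : joint m T) i s : upd b i s i = s.
Proof. by rewrite ffunE eqxx. Qed.

Lemma feat_coord (R : realType) m T (b : joint m T) i (j : 'I_(Defs.dim m T)) :
  feat R b i j 0 = if ((enum_val j).1 \in b i) && (Lo b i (enum_val j).1 == (enum_val j).2 :> nat)
                   then 1 else 0.
Proof.
rewrite /feat mxE; case: (enum_val j) => f l /=; rewrite (@load_split m T b i).
by case: (f \in b i) => //=; rewrite add1n eqSS.
Qed.

Lemma in_toggle m T (a : joint m T) i g f :
  (f \in toggle a i g i) = if f == g then f \notin a i else f \in a i.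
Proof.
rewrite /toggle upd_i !inE; case: (f == g) => /=; by case: (f \in a i).
Qed.
Arguments in_toggle {m T}.

Lemma feat_decomp (R : realType) m T (a : joint m T) i s j :
  feat R (upd a i s) i j 0 = feat R a i j 0 +
    \sum_(g in (s :\: a i) :|: (a i :\: s)) (feat R (toggle a i g) i j 0 - feat R a i j 0).
Proof.
have Lt : forall g, Lo (toggle a i g) i = Lo a i by move=> g; apply: funext => f; apply: Lo_upd.
rewrite !feat_coord upd_i Lo_upd.
under eq_bigr do rewrite feat_coord in_toggle Lt.
set f := (enum_val j).1; set l := (enum_val j).2.
have hD : (f \in (s :\: a i) :|: (a i :\: s)) = ((f \in s) != (f \in a i)).
  by rewrite !inE; case: (f \in s); case: (f \in a i).
case fD: (f \in (s :\: a i) :|: (a i :\: s)).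
  rewrite (bigD1 f) //= eqxx big1 => [|g /andP[_ gf]]; last first.
    by rewrite eq_sym (negbTE gf) subrr.
  rewrite addr0 addrC subrK.
  by move: fD; rewrite hD; case: (f \in s); case: (f \in a i).
rewrite big1 => [|g gD]; last first.
  have -> : (f == g) = false by apply/negbTE; apply: contraFN fD => /eqP ->.
  by rewrite subrr.
rewrite addr0.
by move: fD; rewrite hD; case: (f \in s); case: (f \in a i).
Qed.

Lemma y_decomp (R : realType) m T (a : joint m T) i s (x : 'cV[R]_(Defs.dim m T)) :
  dotv x (feat R (upd a i s) i) =
    (1 - #|(s :\: a i) :|: (a i :\: s)|%:R) * dotv x (feat R a i) +
    \sum_(g in (s :\: a i) :|: (a i :\: s)) dotv x (feat R (toggle a i g) i).
Proof.
set D := (s :\: a i) :|: (a i :\: s).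
rewrite !dotv_sum.
under eq_bigr do rewrite feat_decomp mulrDr mulr_sumr.
rewrite big_split /= exchange_big /=.
have h : forall g, \sum_j x j 0 * (feat R (toggle a i g) i j 0 - feat R a i j 0) =
   \sum_j x j 0 * feat R (toggle a i g) i j 0 - \sum_j x j 0 * feat R a i j 0.
  by move=> g; rewrite -sumrB; apply: eq_bigr => j _; rewrite mulrBr.
rewrite (eq_bigr _ (fun g _ => h g)) sumrB sumr_const.
have h2 : \sum_(g in D) dotv x (feat R (toggle a i g) i) =
  \sum_(g in D) \sum_j x j 0 * feat R (toggle a i g) i j 0.
  by apply: eq_bigr => g _; rewrite dotv_sum.
rewrite h2.
rewrite -mulr_natr -/D.
set u0 := \sum_j _; set U := \sum_(g in D) _.
ring.
Qed.

Lemma sq_sum_le (R : realType) (I : finType) (D : {set I}) (u : I -> R) :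
  (\sum_(g in D) u g) ^+ 2 <= #|D|%:R * \sum_(g in D) u g ^+ 2.
Proof.
set S1 := \sum_(g in D) u g; set B := \sum_(g in D) u g ^+ 2.
have inner : forall g, \sum_(h in D) (u g - u h) ^+ 2 =
    #|D|%:R * u g ^+ 2 - 2 * u g * S1 + B.
  move=> g.
  have -> : \sum_(h in D) (u g - u h) ^+ 2 =
     \sum_(h in D) (u g ^+ 2) - \sum_(h in D) (2 * u g * u h) + \sum_(h in D) u h ^+ 2.
    rewrite -sumrB -big_split /=; apply: eq_bigr => h _; ring.
  by rewrite sumr_const -mulr_sumr -[u g ^+ 2 *+ _]mulr_natl.
have h0 : 0 <= \sum_(g in D) \sum_(h in D) (u g - u h) ^+ 2.
  by apply: sumr_ge0 => g _; apply: sumr_ge0 => h _; apply: sqr_ge0.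
rewrite (eq_bigr _ (fun g _ => inner g)) in h0.
have e : \sum_(g in D) (#|D|%:R * u g ^+ 2 - 2 * u g * S1 + B) =
   #|D|%:R * B - 2 * S1 * S1 + #|D|%:R * B.
  rewrite big_split /= sumrB -!mulr_sumr -mulr_suml sumr_const.
  by rewrite -mulr_sumr -/B -/S1 -[B *+ _]mulr_natl.
rewrite e in h0.
rewrite expr2; lra.
Qed.

Lemma quad_ineq (R : realType) (k u0 b B : R) :
  0 <= k -> b ^+ 2 <= k * B -> 0 <= B ->
  ((1 - k) * u0 + b) ^+ 2 <= ((k - 1) ^+ 2 + k) * (u0 ^+ 2 + B).
Proof.
move=> k0 hb B0.
have [kz|kp] := eqVneq k 0.
  rewrite kz mul0r in hb *.
  have b0 : b = 0.
    by apply/eqP; rewrite -sqrf_eq0 eq_le sqr_ge0 andbT.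
  rewrite b0; have -> : ((1 - 0) * u0 + 0) ^+ 2 = u0 ^+ 2 :> R by ring.
  have -> : ((0 - 1) ^+ 2 + 0) = 1 :> R by ring.
  rewrite mul1r; lra.
have kpos : 0 < k by rewrite lt_def kp k0.
rewrite -subr_ge0 -(pmulr_rge0 _ kpos).
have h1 : 0 <= (k * u0 - (1 - k) * b) ^+ 2 by apply: sqr_ge0.
have h2 : 0 <= (k - 1) ^+ 2 * (k * B - b ^+ 2) by apply: mulr_ge0; [apply: sqr_ge0|lra].
have h3 : 0 <= k * (k * B - b ^+ 2) by apply: mulr_ge0; lra.
have -> : k * (((k - 1) ^+ 2 + k) * (u0 ^+ 2 + B) - ((1 - k) * u0 + b) ^+ 2) =
  (k * u0 - (1 - k) * b) ^+ 2 + (k - 1) ^+ 2 * (k * B - b ^+ 2) + k * (k * B - b ^+ 2)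
  by ring.
lra.
Qed.

Lemma sum_sub_le (R : realType) (I : finType) (D : {set I}) (h : I -> R) :
  (forall g, 0 <= h g) -> \sum_(g in D) h g <= \sum_g h g.
Proof.
move=> h0; rewrite [X in _ <= X](bigID (fun g => g \in D)) /= lerDl.
by apply: sumr_ge0.
Qed.

Lemma y_bound (R : realType) m T (a : joint m T) i s (x : 'cV[R]_(Defs.dim m T)) :
  (1 <= #|T|)%N ->
  dotv x (feat R (upd a i s) i) ^+ 2 <=
   (#|T|%:R) ^+ 2 * (dotv x (feat R a i) ^+ 2 +
                      \sum_g dotv x (feat R (toggle a i g) i) ^+ 2).
Proof.
move=> T1.
rewrite y_decomp.
set D := (s :\: a i) :|: (a i :\: s).
set u := fun g => dotv x (feat R (toggle a i g) i).
set u0 := dotv x (feat R a i).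
have hb := @sq_sum_le R T D u.
have kF : (#|D| <= #|T|)%N by apply: max_card.
have BG := @sum_sub_le R T D (fun g => u g ^+ 2) (fun g => sqr_ge0 _).
have B0 : 0 <= \sum_(g in D) u g ^+ 2 by apply: sumr_ge0 => g _; apply: sqr_ge0.
have q := @quad_ineq R _ u0 _ _ (ler0n _ #|D|) hb B0.
apply: (le_trans q).
have k0 : (0 : R) <= #|D|%:R by apply: ler0n.
have kFr : (#|D|%:R : R) <= #|T|%:R by rewrite ler_nat.
have F1 : (1 : R) <= #|T|%:R by rewrite ler1n.
apply: ler_pM.
- by rewrite addr_ge0 ?sqr_ge0.
- by rewrite addr_ge0 ?sqr_ge0.
- by nra.
- by rewrite lerD2l.
Qed.

Lemma toggle_neq m T (a : joint m T) i f : toggle a i f i != a i.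
Proof.
apply/negP => /eqP h; have := in_toggle a i f f; rewrite h eqxx.
by case: (f \in a i).
Qed.
Arguments toggle_neq {m T}.

Lemma toggle_inj m T (a : joint m T) i i' f f' :
  toggle a i f = toggle a i' f' -> i = i' /\ f = f'.
Proof.
move=> h.
have ii : i = i'.
  apply/eqP; apply/negP => /negP ne.
  have := congr1 (fun b : joint m T => b i) h; rewrite /= /toggle !ffunE eqxx (negbTE ne) => e.
  by have := toggle_neq a i f; rewrite /toggle ffunE eqxx e eqxx.
subst i'; split => //.
have := congr1 (fun b : joint m T => f \in b i) h; rewrite /= !in_toggle eqxx.
by case: eqP => // _; case: (f \in a i).
Qed.
Arguments toggle_inj {m T}.

Lemma card_suppS m T (a : joint m T) : #|suppS a| = (m * #|T|).+1.
Proof.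
rewrite /suppS.
have -> : [set toggle a i f | i : 'I_m, f : T] =
    [set uncurry (toggle a) x | x in setX [set: 'I_m] [set: T]].
  apply/setP => b; apply/imset2P/imsetP.
    by case=> i f _ _ ->; exists (i, f); rewrite ?inE.
  by case=> [[i f]] _ ->; exists i f.
rewrite cardsU1 card_imset; last first.
  by move=> [i f] [i' f'] /= /toggle_inj [-> ->].
rewrite cardsX !cardsT card_ord.
have -> : a \notin [set uncurry (toggle a) x | x in setX [set: 'I_m] [set: T]].
  apply/imsetP => [[[i f] _ /= h]].
  by have := toggle_neq a i f; rewrite -h eqxx.
by [].
Qed.

Lemma a_notin m T (a : joint m T) : a \notin [set toggle a i f | i : 'I_m, f : T].
Proof.
apply/imset2P => [[i f _ _ h]].
by have := toggle_neq a i f; rewrite -h eqxx.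
Qed.

Lemma sum_subset_le (R : realType) (I : finType) (A B : {set I}) (h : I -> R) :
  B \subset A -> (forall x, 0 <= h x) -> \sum_(x in B) h x <= \sum_(x in A) h x.
Proof.
move=> BA h0; rewrite [X in _ <= X](big_setID B) /= (setIidPr BA) lerDl.
by apply: sumr_ge0.
Qed.

Lemma supp_sum_ge (R : realType) m T (a : joint m T) i (h : joint m T -> R) :
  (forall x, 0 <= h x) ->
  h a + \sum_f h (toggle a i f) <= \sum_(b in suppS a) h b.
Proof.
move=> h0; rewrite /suppS big_setU1 ?a_notin //= lerD2l.
have -> : \sum_f h (toggle a i f) = \sum_(b in [set toggle a i f | f : T]) h b.
  rewrite big_imset /=; last by move=> f f' _ _ /toggle_inj [].
  by apply: eq_bigl => f; rewrite inE.
apply: sum_subset_le => //.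
apply/subsetP => b /imsetP [f _ ->]; apply/imset2P; by exists i f.
Qed.

Lemma sum_by_value (R : realType) (J : finType) (S : {set J}) n (w : {ffun 'I_n -> J})
    (h : J -> R) :
  [forall k, w k \in S] ->
  \sum_(k < n) h (w k) = \sum_(b in S) #|[set k | w k == b]|%:R * h b.
Proof.
move=> wS.
have e : forall k, h (w k) = \sum_(b in S) (if w k == b then h b else 0).
  move=> k; rewrite (bigD1 (w k)) ?(forallP wS) //= eqxx big1 ?addr0 //.
  by move=> b /andP[_ hb]; rewrite eq_sym (negbTE hb).
rewrite (eq_bigr _ (fun k _ => e k)) exchange_big; apply: eq_bigr => b _.
rewrite -big_mkcond (eq_bigl (fun k => k \in [set k | w k == b])); last first.
  by move=> k; rewrite inE.
by rewrite sumr_const mulr_natl.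
Qed.

Lemma det_part (R : realType) m T (a : joint m T) n (w : {ffun 'I_n -> joint m T}) :
  (0 < m)%N -> (2 <= #|T|)%N ->
  [forall k, w k \in suppS a] ->
  (forall b, b \in suppS a ->
     n%:R / (2 * ((m * #|T|).+1)%:R) <= #|[set k | w k == b]|%:R :> R) ->
  good_event R a w.
Proof.
move=> m0 T2 wS hc i p [p0 p1] x.
set c := n%:R / (2 * m%:R * (#|T|%:R) ^+ 4) : R.
change (0 <= qf x (covV R w - (1%:M + c *: exp_outer a i p))).
rewrite /covV opprD addrACA subrr add0r qfB qfZ qf_sum.
under eq_bigr do rewrite qf_sum.
under eq_bigr do under eq_bigr do rewrite /outer qf_outer.
rewrite /exp_outer qf_sum.
under [X in _ - c * X]eq_bigr do rewrite qfZ /outer qf_outer.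
set u0 := dotv x (feat R a i).
set G := u0 ^+ 2 + \sum_f dotv x (feat R (toggle a i f) i) ^+ 2.
set F : R := #|T|%:R.
set c' : R := n%:R / (2 * ((m * #|T|).+1)%:R).
have G0 : 0 <= G by rewrite addr_ge0 ?sqr_ge0 // sumr_ge0 // => f _; apply: sqr_ge0.
have T1 : (1 <= #|T|)%N by apply: leq_trans T2.
have step1 : \sum_s p s * dotv x (feat R (upd a i s) i) ^+ 2 <= F ^+ 2 * G.
  apply: (le_trans (y := \sum_s p s * (F ^+ 2 * G))).
    by apply: ler_sum => s _; apply: ler_wpM2l => //; apply: y_bound.
  by rewrite -mulr_suml p1 mul1r.
have step2 : c' * G <= \sum_k \sum_j dotv x (feat R (w k) j) ^+ 2.
  apply: (le_trans (y := \sum_k dotv x (feat R (w k) i) ^+ 2)); last first.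
    apply: ler_sum => k _; rewrite (bigD1 i) //= lerDl.
    by apply: sumr_ge0 => j _; apply: sqr_ge0.
  rewrite (@sum_by_value R _ _ _ w (fun b => dotv x (feat R b i) ^+ 2) wS).
  apply: (le_trans (y := \sum_(b in suppS a) c' * dotv x (feat R b i) ^+ 2)); last first.
    by apply: ler_sum => b bS; apply: ler_wpM2r; [apply: sqr_ge0 | apply: hc].
  rewrite -mulr_sumr; apply: ler_wpM2l.
    by rewrite /c' divr_ge0 // ?mulr_ge0 // ler0n.
  exact: (@supp_sum_ge R m T a i (fun b => dotv x (feat R b i) ^+ 2) (fun b => sqr_ge0 _)).
have step3 : c * (F ^+ 2 * G) <= c' * G.
  rewrite mulrA; apply: ler_wpM2r => //.
  have Fp : 0 < F by rewrite /F ltr0n.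
  have mp : (0 : R) < m%:R by rewrite ltr0n.
  have hN : ((m * #|T|).+1)%:R <= m%:R * F ^+ 2 :> R.
    rewrite /F -natrX -natrM ler_nat.
    have : (m * #|T| + 1 <= m * #|T| ^ 2)%N by rewrite expnS expn1; nia.
    by rewrite addn1.
  have e : c * F ^+ 2 = n%:R * (2 * m%:R * F ^+ 2)^-1.
    rewrite /c /F; field.
    by rewrite !pnatr_eq0 -!lt0n m0 (leq_trans _ T2).
  rewrite e /c'; apply: ler_wpM2l; first by apply: ler0n.
  rewrite lef_pV2 ?posrE ?mulr_gt0 ?exprn_gt0 ?ltr0n //.
  nra.
have c0 : 0 <= c by rewrite /c divr_ge0 // mulr_ge0 // ?mulr_ge0 // ?exprn_ge0 // ler0n.
have := ler_wpM2l c0 step1.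
lra.
Qed.

Theorem mainTheorem8 (R : realType) (m : nat) (T : finType)
    (r : T -> nat -> R) (astar : joint m T) (delta : R) (n : nat) :
  (0 < m)%N -> (2 <= #|T|)%N ->
  is_pure_NE r astar ->
  0 < delta < 1 ->
  8 * ((m * #|T|).+1)%:R * ln (((m * #|T|).+1)%:R / delta) <= n%:R ->
  1 - delta <= @prob_iid_unif R m T (suppS astar) n (@good_event R m T astar n).
Proof.
move=> m0 T2 _ /andP[d0 _] hn.
rewrite /prob_iid_unif.
apply: (@prob_part R (joint m T) (suppS astar) n (m * #|T|).+1 delta) => //.
  exact: card_suppS.
by move=> w wS hc; apply: det_part.
Qed.
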